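(* Let $p$ be a prime, $r\geq 1$ and $d\geq 0$. Then $$\prod_{\lambda\in\mathrm{Par}(d)}\vartheta_{p^r}(\lambda)=p^{\,r\,l(d)},$$ i.e. $\sum_{\lambda\in\mathrm{Par}(d)}\log_p\vartheta_{p^r}(\lambda)=r\,l(d)$. (Equivalently, the product equals $\det X_{p^r,d}$.)
   Context: $\mathrm{Par}(d)$ is the set of partitions of $d$; for a partition $\lambda$, $m_n(\lambda)$ is the multiplicity of $n$ as a part and $l(\lambda)$ the number of parts; $l(d)=\sum_{\lambda\in\mathrm{Par}(d)}l(\lambda)$ is the total length function. $\nu_p$ is the $p$-adic valuation. For an integer $a\geq 0$ let $d_p(a)=\sum_{j\geq1}\lfloor a/p^j\rfloor$ (so $p^{d_p(a)}$ is the $p$-part of $a!$). Define $$\vartheta_{p^r}(\lambda)=\prod_{\substack{n\geq1\\ 0\leq\nu_p(n)<r}}p^{(r-\nu_p(n))m_n(\lambda)+d_p(m_n(\lambda))}.$$ Also $X_{p^r,d}=(\langle m_\lambda,h_\mu\rangle_{p^r})_{\lambda,\mu\in\mathrm{Par}(d)}$, where $\langle p_\lambda,p_\mu\rangle_{\ell}=\delta_{\lambda\mu}\ell^{l(\lambda)}z_\lambda$ on symmetric functions ($m,h,p$ the monomial, complete homogeneous and power-sum bases, $z_\lambda=\prod_r r^{m_r(\lambda)}m_r(\lambda)!$). *)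

(* Defs.v *)
From mathcomp Require Import all_boot.
Set Implicit Arguments. Unset Strict Implicit. Unset Printing Implicit Defensive.

Definition is_partition (d : nat) (s : seq nat) : bool :=
  [&& sorted geq s, all (fun x => 0 < x) s & sumn s == d].

(* Candidates: every partition of d has at most d parts, each <= d; pad with
   zeros to length d and drop the zeros again. *)
Definition par_candidates (d : nat) : seq (seq nat) :=
  [seq filter (fun x => 0 < x) (map (@nat_of_ord d.+1) (tval t))
  | t <- enum {: d.-tuple 'I_d.+1}].

Definition Par (d : nat) : seq (seq nat) :=
  undup (filter (is_partition d) (par_candidates d)).

Definition mult (n : nat) (la : seq nat) : nat := count_mem n la.

Definition ltot (d : nat) : nat := \sum_(la <- Par d) size la.

(* d_p(a) = sum_{j>=1} floor(a / p^j); terms with j > a vanish (p >= 2). *)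
Definition dp (p a : nat) : nat := \sum_(1 <= j < a.+1) a %/ p ^ j.

(* vartheta_{p^r}(lambda): product over n >= 1 with nu_p(n) < r; factors with
   n not a part (in particular n > sumn la) equal p^0 = 1. nu_p(n) = logn p n. *)
Definition vartheta (p r : nat) (la : seq nat) : nat :=
  \prod_(1 <= n < (sumn la).+1 | logn p n < r)
     p ^ ((r - logn p n) * mult n la + dp p (mult n la)).

(* Main.v *)
Require Import Defs.
From mathcomp Require Import all_boot.
From Stdlib Require Import Lia.
Set Implicit Arguments. Unset Strict Implicit. Unset Printing Implicit Defensive.

Lemma geq_trans : transitive geq.
Proof. by move=> x y z H1 H2; apply: leq_trans H2 H1. Qed.
Lemma geq_total : total geq.
Proof. by move=> x y; apply: leq_total. Qed.
Lemma geq_anti : antisymmetric geq.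
Proof. by move=> x y H; apply: anti_leq; rewrite andbC. Qed.

Lemma leq_sumn_mem x s : x \in s -> x <= sumn s.
Proof.
elim: s => //= y s IH; rewrite inE => /orP[/eqP->|/IH H]; first exact: leq_addr.
exact: leq_trans H (leq_addl _ _).
Qed.

Lemma size_le_sumn s : all (fun x => 0 < x) s -> size s <= sumn s.
Proof. elim: s => //= x s IH /andP[H1 H2]; exact: leq_add H1 (IH H2). Qed.

Lemma mem_Par d la : (la \in Par d) = is_partition d la.
Proof.
rewrite /Par mem_undup mem_filter; case Hp: (is_partition d la) => //=.
move: Hp => /and3P[Hs Hpos /eqP Hsum].
have Hsz : size la <= d by rewrite -Hsum size_le_sumn.
have Hle : forall x, x \in la -> x < d.+1.
  by move=> x Hx; rewrite ltnS -Hsum leq_sumn_mem.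
set s := la ++ nseq (d - size la) 0.
have Hs1 : size (map (fun x => @inord d x) s) == d.
  by rewrite size_map size_cat size_nseq subnKC.
apply/mapP; exists (Tuple Hs1); first by rewrite mem_enum.
rewrite /= -map_comp.
have -> : map (@nat_of_ord d.+1 \o (fun x => @inord d x)) s = s.
  rewrite -[RHS]map_id; apply/eq_in_map => x; rewrite /s mem_cat => /orP[/Hle H|].
    by rewrite /= inordK.
  by move/nseqP=> [-> _]; rewrite /= inordK.
rewrite /s filter_cat (all_filterP Hpos).
by elim: (d - size la) => [|k IH]; rewrite ?cats0.
Qed.

Lemma remc_spec c n (la : seq nat) : c <= count_mem n la ->
  perm_eq la (nseq c n ++ iter c (rem n) la) /\ subseq (iter c (rem n) la) la.
Proof.
elim: c la => [|c IH] la Hc /=; first by split; [exact: perm_refl| exact: subseq_refl].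
have Hn : n \in la by rewrite -has_pred1 has_count (leq_trans _ Hc).
have Hp := perm_to_rem Hn.
have Hc' : c <= count_mem n (rem n la).
  by move: Hc; rewrite (permP Hp) /= eqxx add1n ltnS.
have [P1 S1] := IH _ Hc'.
rewrite -[rem n (iter c (rem n) la)]/(iter c.+1 (rem n) la) iterSr; split.
  by apply: (perm_trans Hp); rewrite /= perm_cons.
exact: subseq_trans S1 (rem_subseq _ _).
Qed.

Lemma mult_bound n la : mult n la * n <= sumn la.
Proof.
elim: la => //= x s IH; rewrite /mult /= mulnDl.
apply: leq_add => //; case: eqP => [->|_]; by rewrite ?mul1n.
Qed.

Definition ins c n (mu : seq nat) := sort geq (nseq c n ++ mu).

Lemma count_Par_eq c n d : 0 < n -> c * n <= d ->
  count (fun la => c <= mult n la) (Par d) = size (Par (d - c * n)).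
Proof.
move=> Hn Hcd; rewrite -size_filter.
have Hu1 : uniq (filter (fun la => c <= mult n la) (Par d)).
  by rewrite filter_uniq // undup_uniq.
have Hu2 : uniq (map (ins c n) (Par (d - c * n))).
  rewrite map_inj_in_uniq ?undup_uniq // => m1 m2.
  rewrite !mem_Par => /and3P[S1 _ _] /and3P[S2 _ _] /(perm_sortP geq_total geq_trans geq_anti).
  by rewrite perm_cat2l => /(sorted_eq geq_trans geq_anti S1 S2).
rewrite -[size (Par _)](size_map (ins c n)); apply/perm_size/uniq_perm => // la.
rewrite mem_filter mem_Par; apply/andP/mapP.
- move=> [Hc /and3P[Hs Hpos /eqP Hsum]].
  have [P1 S1] := remc_spec Hc.
  exists (iter c (rem n) la).
    rewrite mem_Par; apply/and3P; split.
    + exact: (subseq_sorted geq_trans S1 Hs).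
    + by apply/allP => x /(mem_subseq S1) Hx; exact: (allP Hpos).
    + by rewrite -Hsum (perm_sumn P1) sumn_cat sumn_nseq mulnC addKn.
  rewrite /ins; apply/esym; rewrite -[RHS](sorted_sort geq_trans Hs).
  by apply/(perm_sortP geq_total geq_trans geq_anti); rewrite perm_sym.
- move=> [mu]; rewrite mem_Par => /and3P[Hs Hpos /eqP Hsum] ->.
  have Hp : perm_eq (sort geq (nseq c n ++ mu)) (nseq c n ++ mu) by apply/permPl/perm_sort.
  split.
    by rewrite /mult /ins (permP Hp) count_cat count_nseq /= eqxx mul1n leq_addr.
  apply/and3P; split.
  + exact: sort_sorted geq_total _.
  + rewrite /ins (perm_all _ Hp) all_cat Hpos andbT.
    by apply/allP => x /nseqP[-> _].
  + by rewrite /ins (perm_sumn Hp) sumn_cat sumn_nseq Hsum mulnC subnKC.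
Qed.

Definition g d m := if m <= d then size (Par (d - m)) else 0.

Lemma count_Par c n d : 0 < n ->
  count (fun la => c <= mult n la) (Par d) = g d (c * n).
Proof.
move=> Hn; rewrite /g; case: leqP => H; first exact: count_Par_eq.
apply/eqP; rewrite eqn0Ngt -has_count; apply/hasPn => la.
rewrite mem_Par => /and3P[_ _ /eqP Hs]; rewrite -ltnNge.
rewrite -(ltn_pmul2r Hn); apply: leq_ltn_trans (mult_bound n la) _.
by rewrite Hs.
Qed.

Lemma sum_le a K : \sum_(1 <= k < K.+1) (k <= a) = minn a K.
Proof.
elim: K => [|K IH]; first by rewrite big_geq // minn0.
rewrite big_nat_recr //= IH.
case: (leqP a K) => H.
  have -> : minn a K.+1 = a by apply/minn_idPl; exact: leq_trans H (leqnSn _).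
  by rewrite addn0.
have -> : minn a K.+1 = K.+1 by apply/minn_idPr.
by rewrite addn1.
Qed.

Lemma div_cake m q K : 0 < q -> m <= K ->
  m %/ q = \sum_(1 <= k < K.+1) (k * q <= m).
Proof.
move=> Hq HK.
rewrite (eq_bigr (fun k => (k <= m %/ q) : nat)); last by move=> k _; rewrite leq_divRL.
by rewrite sum_le; apply/esym/minn_idPl; exact: leq_trans (leq_div _ _) HK.
Qed.

Lemma Par_parts d la x : la \in Par d -> x \in la -> 0 < x <= d.
Proof.
rewrite mem_Par => /and3P[_ Hpos /eqP Hs] Hx.
by rewrite (allP Hpos _ Hx) -Hs leq_sumn_mem.
Qed.

Lemma mult_le d n la : 0 < n -> la \in Par d -> mult n la <= d.
Proof.
move=> Hn Hla; move: Hla (Hla); rewrite mem_Par => /and3P[_ _ /eqP Hs] _.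
apply: leq_trans (leq_pmulr _ Hn) _; rewrite -Hs; exact: mult_bound.
Qed.

Definition Sf d n := \sum_(la <- Par d) mult n la.

Lemma sum_div_Par d n q : 0 < n -> 0 < q ->
  \sum_(la <- Par d) mult n la %/ q = \sum_(1 <= k < d.+1) g d (k * q * n).
Proof.
move=> Hn Hq.
rewrite (eq_big_seq (fun la => \sum_(1 <= k < d.+1) (k * q <= mult n la) : nat)); last first.
  by move=> la Hla; apply: div_cake => //; exact: mult_le.
rewrite exchange_big; apply: eq_bigr => k _.
rewrite -count_Par // -sum1_count [RHS]big_mkcond /=.
by apply: eq_bigr => la _; case: (_ <= _).
Qed.

Lemma Sf_div d n q : 0 < n -> 0 < q ->
  \sum_(la <- Par d) mult n la %/ q = Sf d (q * n).
Proof.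
move=> Hn Hq; rewrite sum_div_Par // /Sf.
rewrite (eq_bigr (fun la => mult (q * n) la %/ 1)); last by move=> la _; rewrite divn1.
rewrite sum_div_Par ?muln_gt0 ?Hn ?Hq //.
by apply: eq_bigr => k _; rewrite muln1 mulnA.
Qed.

Lemma Sf_big d m : d < m -> Sf d m = 0.
Proof.
move=> Hm; apply: big1_seq => la /andP[_ Hla]; apply/count_memPn.
apply/negP => /(Par_parts Hla) /andP[_ H].
by move: (leq_trans Hm H); rewrite ltnn.
Qed.

Lemma pt j v r : 0 < j -> (j <= v : nat) = (j <= v - r) + ((j <= v) && (v - j < r)).
Proof.
move=> H0.
case: (leqP j (v - r)) => H1; case: (leqP j v) => H2; case: (ltnP (v - j) r) => H3 //=;
 exfalso; move/leP: H0; move/leP: H1; move/leP: H2; move/leP: H3; rewrite -!minusE; lia.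
Qed.

Lemma sum_window v r K : v <= K ->
  \sum_(1 <= j < K.+1) ((j <= v) && (v - j < r)) = minn v r.
Proof.
move=> HK.
have E : \sum_(1 <= j < K.+1) (j <= v) =
   \sum_(1 <= j < K.+1) (j <= v - r) + \sum_(1 <= j < K.+1) ((j <= v) && (v - j < r)).
  rewrite -big_split /=; apply: eq_big_nat => j /andP[Hj _]; exact: pt.
move: E; rewrite !sum_le.
have -> : minn v K = v by apply/minn_idPl.
have -> : minn (v - r) K = v - r by apply/minn_idPl; exact: leq_trans (leq_subr _ _) HK.
by move=> E; apply: (@addnI (v - r)); rewrite -E minnE subnKC // leq_subr.
Qed.

Lemma pred1_sum (x : nat) (P : pred nat) a b :
  \sum_(a <= n < b | P n) (x == n : nat) = ((a <= x < b) && P x).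
Proof.
rewrite big_mkcond /=.
rewrite (eq_bigr (fun n => if P n && (n == x) then 1 else 0)); last first.
  by move=> n _; rewrite eq_sym; case: (P n); case: (n == x).
rewrite -big_mkcond big_nat1_cond_eq.
by case: (_ && _).
Qed.

Lemma logn_le p m : prime p -> 0 < m -> logn p m < m.
Proof.
move=> Pp Hm; apply: (leq_trans (ltn_expl _ (prime_gt1 Pp))).
exact: dvdn_leq Hm (pfactor_dvdnn _ _).
Qed.

Lemma inner_count p r d m : prime p -> 0 < m -> m <= d ->
  \sum_(1 <= n < d.+1 | logn p n < r) \sum_(1 <= j < d.+1) (m == p ^ j * n : nat)
  = minn (logn p m) r.
Proof.
move=> Pp Hm Hmd.
have Hpj : forall j, 0 < p ^ j by move=> j; rewrite expn_gt0 prime_gt0.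
rewrite exchange_big /=.
rewrite (eq_big_nat _ _ (F2 := fun j => ((j <= logn p m) && (logn p m - j < r)) : nat)).
  by apply: sum_window; apply: ltnW; apply: leq_trans (logn_le Pp Hm) Hmd.
move=> j /andP[Hj _].
case Hd: (p ^ j %| m).
- have Em : m = p ^ j * (m %/ p ^ j) by rewrite mulnC divnK.
  rewrite (eq_bigr (fun n => (m %/ p ^ j == n : nat))); last first.
    by move=> n _; rewrite {1}Em eqn_pmul2l.
  rewrite pred1_sum.
  have Hj2 : j <= logn p m by rewrite -pfactor_dvdn.
  rewrite Hj2 logn_div // pfactorK //.
  rewrite divn_gt0 // (dvdn_leq Hm Hd) /= ltnS (leq_trans (leq_div _ _) Hmd).
  by [].
- have Hj2 : (j <= logn p m) = false by rewrite -pfactor_dvdn.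
  rewrite Hj2 /=; apply: big1 => n _.
  case: eqP => // E; exfalso; move: Hd; rewrite E dvdn_mulr //.
Qed.

Lemma reindex_nu p r d (S : nat -> nat) : prime p -> (forall m, d < m -> S m = 0) ->
  \sum_(1 <= n < d.+1 | logn p n < r) \sum_(1 <= j < d.+1) S (p ^ j * n)
  = \sum_(1 <= m < d.+1) minn (logn p m) r * S m.
Proof.
move=> Pp HS.
transitivity (\sum_(1 <= n < d.+1 | logn p n < r) \sum_(1 <= j < d.+1)
                \sum_(1 <= m < d.+1) ((m == p ^ j * n) * S m)).
  rewrite big_seq_cond [RHS]big_seq_cond; apply: eq_bigr => n.
  rewrite mem_index_iota => /andP[/andP[Hn _] _].
  apply: eq_bigr => j _.
  rewrite (eq_bigr (fun m => if m == p ^ j * n then S m else 0)); last first.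
    by move=> m _; case: eqP; rewrite ?mul1n ?mul0n.
  rewrite -big_mkcond big_nat1_eq.
  case: ifP => // /negbT; rewrite muln_gt0 expn_gt0 prime_gt0 // Hn /= ltnNge negbK.
  by move=> H; rewrite HS.
rewrite (eq_bigr (fun n => \sum_(1 <= m < d.+1) \sum_(1 <= j < d.+1) ((m == p ^ j * n) * S m))); last first.
  by move=> n _; rewrite exchange_big.
rewrite exchange_big /=; apply: eq_big_nat => m /andP[Hm Hmd].
rewrite -(@inner_count p r d m Pp Hm); last by rewrite -ltnS.
rewrite big_distrl /=; apply: eq_bigr => n _.
by rewrite big_distrl.
Qed.

Lemma dp_ext p a d : prime p -> a <= d -> dp p a = \sum_(1 <= j < d.+1) a %/ p ^ j.
Proof.
move=> Pp Had; rewrite /dp [RHS](@big_cat_nat _ _ _ a.+1) //=.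
rewrite [X in _ = _ + X]big_nat_cond [X in _ = _ + X]big1 ?addn0 // => j.
rewrite andbT => /andP[Hj _]; apply: divn_small.
exact: leq_trans Hj (ltnW (ltn_expl _ (prime_gt1 Pp))).
Qed.

Lemma sum_dp p d n : prime p -> 0 < n ->
  \sum_(la <- Par d) dp p (mult n la) = \sum_(1 <= j < d.+1) Sf d (p ^ j * n).
Proof.
move=> Pp Hn.
rewrite (eq_big_seq (fun la => \sum_(1 <= j < d.+1) mult n la %/ p ^ j)); last first.
  by move=> la Hla; apply: dp_ext => //; exact: mult_le.
rewrite exchange_big; apply: eq_bigr => j _.
by rewrite Sf_div // expn_gt0 prime_gt0.
Qed.

Lemma size_count (s : seq nat) K : (forall x, x \in s -> 0 < x <= K) ->
  size s = \sum_(1 <= n < K.+1) count_mem n s.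
Proof.
elim: s => [|x s IH] Hs; first by rewrite big1.
rewrite /= big_split /= -IH; last by move=> y Hy; apply: Hs; rewrite inE Hy orbT.
have E : \sum_(1 <= i < K.+1) (x == i : nat) = _ := pred1_sum x xpredT 1 K.+1.
rewrite E andbT ltnS Hs ?inE ?eqxx //.
Qed.

Lemma ltot_eq d : ltot d = \sum_(1 <= n < d.+1) Sf d n.
Proof.
rewrite /ltot /Sf.
rewrite (eq_big_seq (fun la => \sum_(1 <= n < d.+1) mult n la)); last first.
  by move=> la Hla; apply: size_count => x; apply: Par_parts.
by rewrite exchange_big.
Qed.

Theorem proposition4p1 (p r d : nat) :
  prime p -> 0 < r ->
  \prod_(la <- Par d) vartheta p r la = p ^ (r * ltot d).
Proof.
move=> Pp Hr.
set E := fun la => \sum_(1 <= n < d.+1 | logn p n < r)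
   ((r - logn p n) * mult n la + dp p (mult n la)).
rewrite (eq_big_seq (fun la => p ^ E la)); last first.
  move=> la Hla; move: (Hla); rewrite mem_Par => /and3P[_ _ /eqP Hs].
  by rewrite /vartheta Hs /E (big_morph (expn p) (expnD p) (expn0 p)).
rewrite -(big_morph (expn p) (expnD p) (expn0 p)); congr (p ^ _).
rewrite /E exchange_big /=.
rewrite big_seq_cond.
rewrite (eq_bigr (fun n => (r - logn p n) * Sf d n + \sum_(1 <= j < d.+1) Sf d (p ^ j * n))); last first.
  move=> n /andP[]; rewrite mem_index_iota => /andP[Hn _] _.
  by rewrite big_split /= -big_distrr /= sum_dp.
rewrite -big_seq_cond big_split /=.
rewrite (@reindex_nu p r d (Sf d) Pp); last by move=> m; exact: Sf_big.
rewrite big_mkcond /=.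
rewrite (eq_bigr (fun n => (r - logn p n) * Sf d n)); last first.
  move=> n _; case: ifP => // /negbT; rewrite -leqNgt => H.
  by have /eqP -> : r - logn p n == 0 by rewrite subn_eq0.
rewrite -big_split ltot_eq big_distrr /=; apply: eq_bigr => n _.
rewrite -mulnDl; congr (_ * _).
case: (leqP r (logn p n)) => H.
  by have /eqP -> : r - logn p n == 0 by rewrite subn_eq0.
by rewrite subnK // ltnW.
Qed.
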